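(* Assume $\|\hat F'(y)-\hat F'(x)\|_F\le L_{\hat F}\|y-x\|$ for all $x,y\in\mathcal F$. Let $x\in\mathcal F$, $\tau>0$, $L\ge L_{\hat F}$, and suppose $T_{L,\tau}(x)\in\mathcal F$. Then for every $r>0$, $$\frac\tau2+\frac{\hat f_2(x)}{2\tau}-\hat f_1(T_{L,\tau}(x))\ge Lr^2\varkappa\Big(\frac{\Delta_r(x)}{2\tau Lr^2}\Big),$$ where $\Delta_r(x)=\hat f_2(x)-\min_{y}\{\|\hat F(x)+\hat F'(x)(y-x)\|^2:\|y-x\|\le r\}$ and $\varkappa(t)=\frac{t^2}2$ for $t\in[0,1]$, $\varkappa(t)=t-\frac12$ for $t>1$.
   Context: Let $F:\mathbb R^n\to\mathbb R^m$ be smooth, $\hat F=\frac1{\sqrt m}F$ with Jacobian $\hat F'(x)$; Euclidean norms, $\|\cdot\|_F$ Frobenius norm; $\mathcal F\subseteq\mathbb R^n$ closed convex with nonempty interior. $\hat f_1(x)=\|\hat F(x)\|$, $\hat f_2=\hat f_1^2$, $\psi_{x,L,\tau}(y)=\frac\tau2+\frac1{2\tau}\|\hat F(x)+\hat F'(x)(y-x)\|^2+\frac L2\|y-x\|^2$, and $T_{L,\tau}(x)=\arg\min_{y\in\mathbb R^n}\psi_{x,L,\tau}(y)$. *)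

(* Defs.v *)
From HB Require Import structures.
From mathcomp Require Import all_boot all_order all_algebra.
From mathcomp Require Import all_classical all_reals all_analysis.
Set Implicit Arguments. Unset Strict Implicit. Unset Printing Implicit Defensive.
Import Order.TTheory GRing.Theory Num.Theory.
Import numFieldNormedType.Exports.
Local Open Scope classical_set_scope.
Local Open Scope ring_scope.

Section Defs.
Variable R : realType.

(* Frobenius norm; on column vectors 'cV_n it is the Euclidean norm. *)
Definition frob (p q : nat) (A : 'M[R]_(p, q)) : R :=
  Num.sqrt (\sum_(i < p) \sum_(j < q) A i j ^+ 2).

Definition Fhat (n m : nat) (F : 'cV[R]_n -> 'cV[R]_m) (x : 'cV[R]_n) : 'cV[R]_m :=
  (Num.sqrt (m%:R))^-1 *: F x.

Definition is_jacobian (n m : nat) (f : 'cV[R]_n -> 'cV[R]_m)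
  (Jh : 'cV[R]_n -> 'M[R]_(m, n)) : Prop :=
  forall x, differentiable f x /\ forall v, 'd f x v = Jh x *m v.

Definition fhat1 n m (F : 'cV[R]_n -> 'cV[R]_m) x : R := frob (Fhat F x).
Definition fhat2 n m (F : 'cV[R]_n -> 'cV[R]_m) x : R := fhat1 F x ^+ 2.

Definition psi n m (F : 'cV[R]_n -> 'cV[R]_m) (Jh : 'cV[R]_n -> 'M[R]_(m, n))
  (x : 'cV[R]_n) (L tau : R) (y : 'cV[R]_n) : R :=
  tau / 2 + (2 * tau)^-1 * frob (Fhat F x + Jh x *m (y - x)) ^+ 2
  + L / 2 * frob (y - x) ^+ 2.

Definition Delta n m (F : 'cV[R]_n -> 'cV[R]_m) (Jh : 'cV[R]_n -> 'M[R]_(m, n))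
  (r : R) (x : 'cV[R]_n) : R :=
  fhat2 F x - inf [set frob (Fhat F x + Jh x *m (y - x)) ^+ 2
                   | y in [set y | frob (y - x) <= r]].

Definition kappa (t : R) : R := if t <= 1 then t ^+ 2 / 2 else t - 1 / 2.

End Defs.

(* Main.v *)
Require Import Defs.
From HB Require Import structures.
From mathcomp Require Import all_boot all_order all_algebra.
From mathcomp Require Import all_classical all_reals all_analysis.
From mathcomp Require Import ring lra.
Set Implicit Arguments. Unset Strict Implicit. Unset Printing Implicit Defensive.
Import Order.TTheory GRing.Theory Num.Theory.
Import numFieldNormedType.Exports.
Local Open Scope classical_set_scope.
Local Open Scope ring_scope.

Section H.
Variable R : realType.

Lemma CS (I : finType) (u v : I -> R) :
  (\sum_i u i * v i) ^+ 2 <= (\sum_i u i ^+ 2) * (\sum_i v i ^+ 2).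
Proof.
set U := \sum_i u i ^+ 2; set V := \sum_i v i ^+ 2; set W := \sum_i u i * v i.
have U0 : 0 <= U by apply: sumr_ge0 => i _; exact: sqr_ge0.
have V0 : 0 <= V by apply: sumr_ge0 => i _; exact: sqr_ge0.
have [Ue|Ugt] := eqVneq U 0.
  have uz : forall i, u i = 0.
    move=> i; apply/eqP; rewrite -sqrf_eq0; apply/eqP.
    move: Ue; rewrite /U => /psumr_eq0P; apply => // j _; exact: sqr_ge0.
  have -> : W = 0 by rewrite /W big1 // => i _; rewrite uz mul0r.
  by rewrite expr0n /= mulr_ge0.
have Up : 0 < U by rewrite lt_def Ugt U0.
set a := W / U.
have h : 0 <= \sum_i (a * u i - v i) ^+ 2 by apply: sumr_ge0 => i _; exact: sqr_ge0.
have E : \sum_i (a * u i - v i) ^+ 2 = a ^+ 2 * U - 2 * a * W + V.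
  rewrite (eq_bigr (fun i => a ^+ 2 * u i ^+ 2 - (2 * a) * (u i * v i) + v i ^+ 2)); last first.
    by move=> i _; ring.
  by rewrite big_split sumrB /= -!mulr_sumr.
rewrite E in h.
have aU : a * U = W by rewrite /a divfK.
have : 0 <= V - a * W by move: h; rewrite -aU; nra.
rewrite -aU => h2.
have : 0 <= U * (V - a * (a * U)) by apply: mulr_ge0.
nra.
Qed.

Definition nrm2 k (u : 'cV[R]_k) := \sum_i u i ord0 ^+ 2.
Definition dotv k (u v : 'cV[R]_k) := \sum_i u i ord0 * v i ord0.

Lemma nrm2_ge0 k (u : 'cV[R]_k) : 0 <= nrm2 u.
Proof. by apply: sumr_ge0 => i _; exact: sqr_ge0. Qed.

Lemma frobE k (u : 'cV[R]_k) : frob u = Num.sqrt (nrm2 u).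
Proof. by rewrite /frob /nrm2; congr Num.sqrt; apply: eq_bigr => i _; rewrite big_ord1. Qed.

Lemma frob_ge0 p q (M : 'M[R]_(p, q)) : 0 <= frob M.
Proof. exact: sqrtr_ge0. Qed.

Lemma frob2 k (u : 'cV[R]_k) : frob u ^+ 2 = nrm2 u.
Proof. by rewrite frobE sqr_sqrtr // nrm2_ge0. Qed.

Lemma dot_self k (u : 'cV[R]_k) : dotv u u = frob u ^+ 2.
Proof. by rewrite frob2; apply: eq_bigr => i _; rewrite expr2. Qed.

Lemma dot_le k (u v : 'cV[R]_k) : dotv u v <= frob u * frob v.
Proof.
rewrite !frobE -sqrtrM ?nrm2_ge0 //.
apply: (le_trans (ler_norm _)); rewrite -sqrtr_sqr.
by rewrite ler_sqrt ?mulr_ge0 ?nrm2_ge0 //; apply: CS.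
Qed.

Lemma dotD k (e u v : 'cV[R]_k) : dotv e (u + v) = dotv e u + dotv e v.
Proof. by rewrite /dotv -big_split; apply: eq_bigr => i _; rewrite mxE mulrDr. Qed.

Lemma dotN k (e u : 'cV[R]_k) : dotv e (- u) = - dotv e u.
Proof. by rewrite /dotv -sumrN; apply: eq_bigr => i _; rewrite mxE mulrN. Qed.

Lemma dotB k (e u v : 'cV[R]_k) : dotv e (u - v) = dotv e u - dotv e v.
Proof. by rewrite dotD dotN. Qed.

Lemma dotZ k (e u : 'cV[R]_k) c : dotv e (c *: u) = c * dotv e u.
Proof. by rewrite /dotv mulr_sumr; apply: eq_bigr => i _; rewrite mxE mulrCA. Qed.

Lemma frobD k (u v : 'cV[R]_k) : frob (u + v) <= frob u + frob v.
Proof.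
have e : nrm2 (u + v) = frob u ^+ 2 + 2 * dotv u v + frob v ^+ 2.
  rewrite !frob2 /nrm2 /dotv mulr_sumr -!big_split /=.
  by apply: eq_bigr => i _; rewrite mxE; ring.
rewrite [X in X <= _]frobE e -[X in _ <= X]ger0_norm ?addr_ge0 ?frob_ge0 //.
rewrite -sqrtr_sqr ler_sqrt ?sqr_ge0 //.
have := dot_le u v; nra.
Qed.

Lemma frobZ k (u : 'cV[R]_k) c : frob (c *: u) = `|c| * frob u.
Proof.
rewrite !frobE -sqrtr_sqr -sqrtrM ?sqr_ge0 //; congr Num.sqrt.
by rewrite /nrm2 mulr_sumr; apply: eq_bigr => i _; rewrite mxE exprMn.
Qed.

Lemma frob_eq0 k (u : 'cV[R]_k) : frob u = 0 -> u = 0.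
Proof.
rewrite frobE => /eqP; rewrite sqrtr_eq0 => h.
have h0 : nrm2 u = 0 by apply/eqP; rewrite eq_le h nrm2_ge0.
apply/matrixP => i j; rewrite (ord1 j) mxE; apply/eqP; rewrite -sqrf_eq0; apply/eqP.
by move: h0; rewrite /nrm2 => /psumr_eq0P; apply => // l _; exact: sqr_ge0.
Qed.

Lemma frobM p q (M : 'M[R]_(p, q)) (v : 'cV[R]_q) : frob (M *m v) <= frob M * frob v.
Proof.
rewrite frobE [frob v]frobE /frob -sqrtrM ?sumr_ge0 // => [|i _]; last first.
  by apply: sumr_ge0 => j _; exact: sqr_ge0.
rewrite ler_sqrt ?mulr_ge0 ?nrm2_ge0 ?sumr_ge0 // => [|i _]; last first.
  by apply: sumr_ge0 => j _; exact: sqr_ge0.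
rewrite /nrm2 mulr_suml; apply: ler_sum => i _; rewrite mxE.
exact: CS.
Qed.
End H.

Section D.
Variable R : realType.

Lemma deriv_line n m (G : 'cV[R]_n -> 'cV[R]_m) (Jh : 'cV[R]_n -> 'M[R]_(m, n)) (x d : 'cV[R]_n) (s : R) :
  is_jacobian G Jh -> is_derive s 1 (fun t : R => G (x + t *: d)) (Jh (x + s *: d) *m d).
Proof.
move=> HJ; have [dG dGE] := HJ (x + s *: d).
pose h := fun t : R => x + t *: d.
have hd0 : is_diff s (cst x + ( *:%R ^~ d)) (0 + ( *:%R ^~ d)).
  exact: is_diffD.
have hd : is_diff s h (fun t : R => 0 + t *: d) by exact: hd0.
have dh : differentiable h s by [].
have dc : differentiable (G \o h) s by apply: differentiable_comp.
apply: DeriveDef; first exact: diff_derivable.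
rewrite (@deriveE _ _ _ (G \o h)) // diff_comp // /= dGE; congr (_ *m _).
by rewrite diff_val add0r scale1r.
Qed.

Lemma deriv_dot m (f : R -> 'cV[R]_m) (e D : 'cV[R]_m) (s : R) :
  is_derive s 1 f D -> is_derive s 1 (fun t => dotv e (f t)) (dotv e D).
Proof.
move=> fd.
have coord : forall i, is_derive s 1 (fun t => f t i ord0) (D i ord0).
  move=> i; have df : derivable f s 1 by [].
  apply: DeriveDef; first by move/derivable_mxP : df; apply.
  by rewrite -(@derive_val _ _ _ _ _ _ _ fd) derive_mx // mxE.
have hs : is_derive s 1 (\sum_(i < m) (e i ord0 \*: (fun t => f t i ord0)))
                        (\sum_(i < m) e i ord0 *: D i ord0).
  by apply: is_derive_sum => i; apply: is_deriveZ.
have -> : (fun t => dotv e (f t)) = \sum_(i < m) (e i ord0 \*: (fun t => f t i ord0)).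
  by rewrite fct_sumE; apply/funext => t.
exact: hs.
Qed.

Lemma deriv_lin (k s : R) : is_derive s 1 (fun u : R => u * k) k.
Proof.
have hid : is_derive s (1:R) (fun u : R => u) 1 by exact: is_derive_id.
have h := @is_deriveM R R (fun u : R => u) (cst k) s 1 1 0 hid (is_derive_cst k s 1).
have -> : (fun u : R => u * k) = (fun u : R => u) * cst k by apply/funext.
apply: is_derive_eq h _; by rewrite /= scaler0 add0r /GRing.scale /= mulr1.
Qed.

Lemma deriv_sq (k s : R) : is_derive s 1 (fun u : R => u ^+ 2 * k) (2 * s * k).
Proof.
have hid : is_derive s (1:R) (fun u : R => u) 1 by exact: is_derive_id.
have hsq := @is_deriveM R R (fun u : R => u) (fun u : R => u) s 1 1 1 hid hid.
have h := @is_deriveM R R ((fun u : R => u) * (fun u : R => u)) (cst k) s 1 _ 0 hsq (is_derive_cst k s 1).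
have -> : (fun u : R => u ^+ 2 * k) = ((fun u : R => u) * (fun u : R => u)) * cst k.
  by apply/funext => u; rewrite /= expr2.
apply: is_derive_eq h _; rewrite /= scaler0 add0r /GRing.scale /=; ring.
Qed.
End D.

Section T.
Variable R : realType.

Lemma taylor n m (F : 'cV[R]_n -> 'cV[R]_m) (Jh : 'cV[R]_n -> 'M[R]_(m, n)) (S : set 'cV[R]_n) (LF : R)
  (x T : 'cV[R]_n) :
  is_jacobian (Fhat F) Jh ->
  convex.convex_set (S : set (convex.convex_lmodType _)) ->
  (forall u v, S u -> S v -> frob (Jh v - Jh u) <= LF * frob (v - u)) ->
  S x -> S T ->
  frob (Fhat F T - (Fhat F x + Jh x *m (T - x))) <= LF / 2 * frob (T - x) ^+ 2.
Proof.
move=> HJ Hconv HL Sx ST.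
set d := T - x; set G := Fhat F; set A := Jh x.
set e := G T - (G x + A *m d).
have LFd : 0 <= LF * frob d.
  by apply: le_trans (HL x T Sx ST); exact: frob_ge0.
set c := frob e * LF * frob d ^+ 2.
pose phi (t : R) := dotv e (G (x + t *: d)) - t * dotv e (A *m d) - t ^+ 2 * (c / 2).
have dphi : forall t : R, is_derive t (1:R) phi (dotv e (Jh (x + t *: d) *m d) - dotv e (A *m d) - 2 * t * (c / 2)).
  move=> t.
  have h1 := deriv_dot e (deriv_line x d t HJ).
  have h2 := deriv_lin (dotv e (A *m d)) t.
  have h3 := deriv_sq (c / 2) t.
  have h4 := is_deriveB (is_deriveB h1 h2) h3.
  exact: h4.
have Sxt : forall t, 0 <= t -> t <= 1 -> S (x + t *: d).
  move=> t t0 t1.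
  have := Hconv T x (Itv01 t0 t1) (mem_set ST) (mem_set Sx).
  rewrite inE.
  suff -> : x + t *: d = t *: T + (1 - t) *: x by [].
  by rewrite /d scalerBr scalerBl scale1r addrCA.
have mono : forall u v, 0 <= u -> u <= v -> v <= 1 -> phi v <= phi u.
  apply: ler0_derive1_nincr.
  - by move=> t _; exact: ex_derive.
  - move=> t; rewrite in_itv /= => /andP [t0 t1].
    rewrite derive1E derive_val -dotB -mulmxBl.
    apply: (le_trans (lerB (dot_le _ _) (lexx _))).
    apply: (le_trans (lerB (ler_wpM2l (frob_ge0 _) (frobM _ _)) (lexx _))).
    have hl := HL x (x + t *: d) Sx (Sxt t (ltW t0) (ltW t1)).
    rewrite [x + _ - x]addrAC subrr add0r frobZ ger0_norm ?(ltW t0) // in hl.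
    have := ler_wpM2r (frob_ge0 d) hl.
    have := frob_ge0 e; rewrite /c => fe0 hl2.
    have := ler_wpM2l fe0 hl2.
    nra.
  - apply: derivable_within_continuous => t _; exact: ex_derive.
have := mono 0 1 (lexx _) ler01 (lexx _).
rewrite /phi scale0r addr0 scale1r mul0r expr0n /= mul0r !subr0 mul1r expr1n mul1r.
have xd : x + d = T by rewrite /d addrC subrK.
rewrite xd.
have ee : dotv e e = dotv e (G T) - dotv e (A *m d) - dotv e (G x).
  by rewrite /e dotB dotD; ring.
move=> h.
have h' : frob e ^+ 2 <= frob e * (LF * frob d ^+ 2 / 2).
  rewrite -dot_self ee; move: h; rewrite /c; lra.
have k0 : 0 <= LF * frob d ^+ 2 / 2.
  by rewrite expr2 mulrA divr_ge0 // mulr_ge0 // frob_ge0.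
have := frob_ge0 e.
rewrite mulrAC in k0 h' *; rewrite mulrAC.
move: h' k0; rewrite [LF / 2 * _]mulrAC; nra.
Qed.
End T.

Lemma nrm2_conv (R : realType) k (u w : 'cV[R]_k) (t : R) : 0 <= t -> t <= 1 ->
  frob (u + t *: w) ^+ 2 <= (1 - t) * frob u ^+ 2 + t * frob (u + w) ^+ 2.
Proof.
move=> t0 t1; rewrite !frob2 /nrm2 !mulr_sumr -big_split /=.
apply: ler_sum => i _; rewrite !mxE.
have : 0 <= t * (1 - t) * w i ord0 ^+ 2 by rewrite mulr_ge0 ?sqr_ge0 // mulr_ge0 // subr_ge0.
nra.
Qed.

Lemma frob0 (R : realType) k : frob (0 : 'cV[R]_k) = 0.
Proof. by rewrite frobE /nrm2 big1 ?sqrtr0 // => i _; rewrite mxE expr0n. Qed.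

Lemma kappa_ge0 (R : realType) (s : R) : 0 <= kappa s.
Proof.
rewrite /kappa; case: ifPn => h; first by rewrite divr_ge0 ?sqr_ge0.
rewrite -ltNge in h; lra.
Qed.

Unset Implicit Arguments.
Theorem lemma3 (R : realType) (n m : nat) (F : 'cV[R]_n -> 'cV[R]_m)
  (Jh : 'cV[R]_n -> 'M[R]_(m, n)) (S : set 'cV[R]_n) (LF : R)
  (x T : 'cV[R]_n) (tau L : R) :
  is_jacobian (Fhat F) Jh ->
  closed S -> convex.convex_set (S : set (convex.convex_lmodType _)) -> interior S !=set0 ->
  (forall u v, S u -> S v -> frob (Jh v - Jh u) <= LF * frob (v - u)) ->
  S x -> 0 < tau -> LF <= L ->
  (forall y, psi F Jh x L tau T <= psi F Jh x L tau y) ->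
  S T ->
  forall r : R, 0 < r ->
    tau / 2 + fhat2 F x / (2 * tau) - fhat1 F T
    >= L * r ^+ 2 * kappa (Delta F Jh r x / (2 * tau * L * r ^+ 2)).
Proof.
move=> HJ _ Hconv _ HL Sx tau0 LFL Hmin ST r r0.
set g := Fhat F x; set A := Jh x; set d := T - x.
set LHS := tau / 2 + fhat2 F x / (2 * tau) - fhat1 F T.
set P := psi F Jh x L tau.
have Px : P x = tau / 2 + fhat2 F x / (2 * tau).
  rewrite /P /psi subrr mulmx0 addr0 /fhat2 /fhat1 -/g.
  have -> : frob (0 : 'cV[R]_n) = 0 by rewrite frobE /nrm2 big1 ?sqrtr0 // => i _; rewrite mxE expr0n.
  by rewrite expr0n /= mulr0 addr0 [_^-1 * _]mulrC.
have LFd : 0 <= LF * frob d.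
  by apply: le_trans (HL x T Sx ST); exact: frob_ge0.
have hT : fhat1 F T <= P T.
  have ht := taylor HJ Hconv HL Sx ST.
  rewrite -/g -/A -/d in ht.
  have hD := frobD (g + A *m d) (Fhat F T - (g + A *m d)).
  rewrite addrC subrK in hD.
  rewrite /fhat1 /P /psi -/g -/A -/d.
  set a := frob (g + A *m d).
  have amgm : a <= tau / 2 + (2 * tau)^-1 * a ^+ 2.
    have : 0 <= (a - tau) ^+ 2 / (2 * tau) by rewrite divr_ge0 ?sqr_ge0 // mulr_ge0 // ltW.
    have -> : (a - tau) ^+ 2 / (2 * tau) = tau / 2 + (2 * tau)^-1 * a ^+ 2 - a.
      by field; rewrite gt_eqF.
    lra.
  have fd0 : 0 <= frob d ^+ 2 by exact: sqr_ge0.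
  have : LF / 2 * frob d ^+ 2 <= L / 2 * frob d ^+ 2.
    by rewrite ler_wpM2r // ler_pM2r // invr_gt0 ltr0n.
  rewrite -/a in hD; lra.
have LHS_ge : forall y, P x - P y <= LHS.
  by move=> y; have := Hmin y; rewrite /LHS -Px -/P; lra.
have [L0|Lpos] := leP L 0.
  have : L * r ^+ 2 * kappa (Delta F Jh r x / (2 * tau * L * r ^+ 2)) <= 0.
    by rewrite mulr_le0_ge0 ?kappa_ge0 // mulr_le0_ge0 // sqr_ge0.
  have := LHS_ge T; have := Hmin x; rewrite -/P; lra.
have LHS0 : 0 <= LHS by have := LHS_ge T; have := Hmin x; rewrite -/P; lra.
rewrite /Delta -/g -/A.
set E := [set frob (g + A *m (y - x)) ^+ 2 | y in [set y | frob (y - x) <= r]].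
have fg : fhat2 F x = frob g ^+ 2 by [].
have Ex : E (fhat2 F x).
  exists x; first by rewrite /= subrr frob0 ltW.
  by rewrite subrr mulmx0 addr0.
have Elb : has_lbound E by exists 0 => z [y _ <-]; exact: sqr_ge0.
have Einf : inf E <= fhat2 F x by exact: ge_inf Elb _ Ex.
set Dl := fhat2 F x - inf E.
have D0 : 0 <= Dl by rewrite /Dl subr_ge0.
set a := Dl / (2 * tau).
have tau2 : 0 < 2 * tau by rewrite mulr_gt0.
have aD : a * (2 * tau) = Dl by rewrite /a divfK // gt_eqF.
have a0 : 0 <= a by rewrite divr_ge0 // ltW.
have key : forall t, 0 <= t -> t <= 1 -> t * a - L * r ^+ 2 * t ^+ 2 / 2 <= LHS.
  move=> t t0 t1.
  have [->|tneq] := eqVneq t 0.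
    by rewrite mul0r expr0n /= mulr0 mul0r subr0.
  have tpos : 0 < t by rewrite lt_def tneq t0.
  set K := (LHS + L * r ^+ 2 * t ^+ 2 / 2) * (2 * tau).
  have : fhat2 F x - K / t <= inf E.
    apply: lb_le_inf; first by exists (fhat2 F x).
    move=> z [y yb <-].
    set q := frob (g + A *m (y - x)) ^+ 2.
    have yt := LHS_ge (x + t *: (y - x)).
    rewrite Px /P /psi -/g -/A [x + _ - x]addrAC subrr add0r in yt.
    rewrite -scalemxAr frobZ ger0_norm // in yt.
    have cv := nrm2_conv (g) (A *m (y - x)) t0 t1.
    rewrite -/q -fg in cv.
    set N := frob (g + t *: (A *m (y - x))) ^+ 2 in yt cv.
    set iv := (2 * tau)^-1 in yt.
    have iv0 : 0 < iv by rewrite invr_gt0.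
    have ivt : iv * (2 * tau) = 1 by rewrite mulVf // gt_eqF.
    have fy0 := frob_ge0 (y - x).
    have fyr : frob (y - x) ^+ 2 <= r ^+ 2 by rewrite ler_sqr // ?nnegrE ?ltW.
    have h1 : iv * N <= iv * ((1 - t) * fhat2 F x + t * q) by apply: ler_wpM2l; [exact: ltW | exact: cv].
    have h2 : L / 2 * (t * frob (y - x)) ^+ 2 <= L / 2 * (t ^+ 2 * r ^+ 2).
      by rewrite exprMn; apply: ler_wpM2l; [rewrite divr_ge0 // ltW | apply: ler_wpM2l => //; exact: sqr_ge0].
    have h3 : t * (fhat2 F x - q) * iv - L * r ^+ 2 * t ^+ 2 / 2 <= LHS.
      move: yt h1 h2; rewrite /fhat2 -/g -/fg; lra.
    have h4 : t * (fhat2 F x - q) <= K.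
      rewrite /K; have := ler_wpM2r (ltW tau2) h3.
      have -> : (t * (fhat2 F x - q) * iv - L * r ^+ 2 * t ^+ 2 / 2) * (2 * tau)
         = t * (fhat2 F x - q) - L * r ^+ 2 * t ^+ 2 / 2 * (2 * tau).
        by rewrite mulrBl -[_ * iv * _]mulrA ivt mulr1.
      move=> h; rewrite mulrDl; lra.
    have tK : t * (K / t) = K by rewrite mulrC divfK.
    nra.
  rewrite -/Dl => hD.
  have tK : t * (K / t) = K by rewrite mulrC divfK.
  have h5 : t * Dl <= K by rewrite /Dl; nra.
  have iv0 : 0 < (2 * tau)^-1 by rewrite invr_gt0.
  have : t * Dl * (2 * tau)^-1 <= K * (2 * tau)^-1 by apply: ler_wpM2r => //; exact: ltW.
  have -> : K * (2 * tau)^-1 = LHS + L * r ^+ 2 * t ^+ 2 / 2.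
    by rewrite /K mulrK // unitfE gt_eqF.
  rewrite -mulrA -/a.
  lra.
set s := Dl / (2 * tau * L * r ^+ 2).
have Lr : 0 < L * r ^+ 2 by rewrite mulr_gt0 // exprn_gt0.
have as_ : a = s * (L * r ^+ 2).
  rewrite /a /s; field.
  by rewrite !gt_eqF // ?exprn_gt0 // mulr_gt0.
have s0 : 0 <= s by rewrite /s divr_ge0 // ltW // !mulr_gt0 // exprn_gt0.
rewrite /kappa; case: ifPn => s1.
  have := key s s0 s1; rewrite as_; nra.
rewrite -ltNge in s1.
have := key 1 ler01 (lexx _); rewrite as_; nra.
Qed.
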